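(* Fix all parameters of the cathode model ($h_1,h_2,\sigma_{\mathrm{el}},\sigma_{\mathrm{ion}},\rho_a,D_2,M,F,R,T,A,j_{\mathrm{cell}}>0,V_2,C^{\mathrm{bulk}}$). Let $h_1<h_b<h_b'<h_2$. There do not exist two triples with all of the following properties: 1. $(\phi^{I}_{\mathrm{el}},\phi^{I}_{\mathrm{ion}},C^{I})$ is a cathode solution in the modified formulation with active-layer boundary $h_b$. 2. $(\phi^{II}_{\mathrm{el}},\phi^{II}_{\mathrm{ion}},C^{II})$ is a cathode solution in the modified formulation with active-layer boundary $h_b'$. 3. Their signed quantities $s^{I}$ and $s^{II}$ are nonnegative on $[h_1,h_b]$ and $[h_1,h_b']$ respectively. 4. $s^{II}(h_b)>0$. 5. On $[h_1,h_b]$ the function $C^{II}-C^{I}$ is positive and nonincreasing. In other words, under these conditions the active-layer boundary cannot be enlarged from $h_b$ to $h_b'$ while keeping the cell current and boundary data fixed.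
   Context: Cathode model (isothermal, 1D). Fix real numbers $0<h_1<h_b<h_2$ and positive constants $\sigma_{\mathrm{el}},\sigma_{\mathrm{ion}}$ (effective electronic/ionic conductivities), $\rho_a$ (air density), $D_2$ (effective diffusion coefficient), $M$ (molar mass of $O_2$), $F$ (Faraday constant), $R$ (gas constant), $T$ (temperature), $A$ (reaction surface area per volume). Also fix $j_{\mathrm{cell}}>0$, $V_2\in\mathbb R$ and $C^{\mathrm{bulk}}\in(0,1)$. Charge-transfer current. For $y\in(h_1,h_b)$ set $$i(y)=A\,K\,\Big(\frac{\rho_a R T\,C(y)}{M}\Big)^{0.2}\Big[\exp\Big(\frac{1.2F\eta(y)}{RT}\Big)-\exp\Big(-\frac{F\eta(y)}{RT}\Big)\Big],\qquad K=1.47\cdot10^{6}\,e^{-85859/(RT)}.$$ Define the signed quantity $$s(y)=\phi_{\mathrm{ion}}(y)-\phi_{\mathrm{el}}(y)-\frac{RT}{4F}\ln\frac{C^{\mathrm{bulk}}}{C(y)}.$$ The activation overpotential is $\eta=s$ in the classical formulation and $\eta=|s|$ in the modified formulation. A cathode solution with active-layer boundary $h_b$ is a triple $\phi_{\mathrm{el}},\phi_{\mathrm{ion}},C\in C^1([h_1,h_2])$ with the following properties. - Regularity: each function is $C^2$ on $[h_1,h_b]$ and on $[h_b,h_2]$, and $C>0$. - Equations on $(h_1,h_b)$: $(\sigma_{\mathrm{el}}\phi_{\mathrm{el}}')'=-i$, $(\sigma_{\mathrm{ion}}\phi_{\mathrm{ion}}')'=i$ and $(\rho_aD_2C')'=\frac{M}{4F}i$.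 - Equations on $(h_b,h_2)$: all three left-hand sides vanish. - Boundary conditions: $-\sigma_{\mathrm{el}}\phi_{\mathrm{el}}'(h_2)=j_{\mathrm{cell}}$, $\phi_{\mathrm{ion}}'(h_2)=0$, $\phi_{\mathrm{el}}(h_2)=V_2$, $C(h_2)=C^{\mathrm{bulk}}$, $\phi_{\mathrm{el}}'(h_1)=0$, $-\sigma_{\mathrm{ion}}\phi_{\mathrm{ion}}'(h_1)=j_{\mathrm{cell}}$, $C'(h_1)=0$. - Interface condition: $s(h_b)=0$, i.e. $\eta(h_b)=0$. In the claim, $s^{I}$ and $s^{II}$ denote the signed quantity $s$ computed from the respective triple. *)

(* Defs.v *)
From Stdlib Require Import Reals Lra.
Open Scope R_scope.

(** Model parameters. [Rg] is the gas constant (R is the type of reals). *)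
Record cathode_params := mkParams {
  h1 : R; h2 : R;
  sigma_el : R; sigma_ion : R;
  rho_a : R; D2 : R; Mm : R; Fc : R; Rg : R; Tt : R; Aa : R;
  j_cell : R; V2 : R; C_bulk : R }.

Definition valid_params (p : cathode_params) : Prop :=
  0 < h1 p /\ h1 p < h2 p /\
  0 < sigma_el p /\ 0 < sigma_ion p /\ 0 < rho_a p /\ 0 < D2 p /\
  0 < Mm p /\ 0 < Fc p /\ 0 < Rg p /\ 0 < Tt p /\ 0 < Aa p /\
  0 < j_cell p /\ 0 < C_bulk p /\ C_bulk p < 1.

(** f' is the derivative of f at x, relative to the closed interval [a,b]
    (one-sided at the endpoints, ordinary derivative in the interior). *)
Definition deriv_within (f : R -> R) (l : R) (a b x : R) : Prop :=
  forall eps, 0 < eps -> exists delta, 0 < delta /\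
    forall y, a <= y <= b -> y <> x -> Rabs (y - x) < delta ->
      Rabs ((f y - f x) / (y - x) - l) < eps.

Definition has_deriv_on (f f' : R -> R) (a b : R) : Prop :=
  forall x, a <= x <= b -> deriv_within f (f' x) a b x.

Definition cont_on (f : R -> R) (a b : R) : Prop :=
  forall x, a <= x <= b -> forall eps, 0 < eps -> exists delta, 0 < delta /\
    forall y, a <= y <= b -> Rabs (y - x) < delta -> Rabs (f y - f x) < eps.

Definition C1_with (f f' : R -> R) (a b : R) : Prop :=
  has_deriv_on f f' a b /\ cont_on f' a b.

Definition C2_with (f f' f'' : R -> R) (a b : R) : Prop :=
  has_deriv_on f f' a b /\ has_deriv_on f' f'' a b /\ cont_on f'' a b.

Definition Kconst (p : cathode_params) : R :=
  (147 / 100) * 10 ^ 6 * exp (- 85859 / (Rg p * Tt p)).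

Definition s_signed (p : cathode_params) (pel pion C : R -> R) (y : R) : R :=
  pion y - pel y - Rg p * Tt p / (4 * Fc p) * ln (C_bulk p / C y).

Definition eta (modified : bool) (p : cathode_params) (pel pion C : R -> R) (y : R) : R :=
  if modified then Rabs (s_signed p pel pion C y) else s_signed p pel pion C y.

Definition i_ct (modified : bool) (p : cathode_params) (pel pion C : R -> R) (y : R) : R :=
  let e := eta modified p pel pion C y in
  Aa p * Kconst p * Rpower (rho_a p * Rg p * Tt p * C y / Mm p) (2 / 10) *
  (exp (12 / 10 * Fc p * e / (Rg p * Tt p)) - exp (- (Fc p * e / (Rg p * Tt p)))).

(** Cathode solution with active-layer boundary hb. The first derivatives are
    global on [h1,h2] (C^1); the second derivatives are taken separately on
    [h1,hb] and [hb,h2] (piecewise C^2). *)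
Definition cathode_solution (modified : bool) (p : cathode_params) (hb : R)
    (pel pion C : R -> R) : Prop :=
  exists pel' pion' C' pelL pionL CL pelR pionR CR : R -> R,
    C1_with pel pel' (h1 p) (h2 p) /\ C1_with pion pion' (h1 p) (h2 p) /\
    C1_with C C' (h1 p) (h2 p) /\
    C2_with pel pel' pelL (h1 p) hb /\ C2_with pion pion' pionL (h1 p) hb /\
    C2_with C C' CL (h1 p) hb /\
    C2_with pel pel' pelR hb (h2 p) /\ C2_with pion pion' pionR hb (h2 p) /\
    C2_with C C' CR hb (h2 p) /\
    (forall y, h1 p <= y <= h2 p -> 0 < C y) /\
    (forall y, h1 p < y < hb ->
       sigma_el p * pelL y = - i_ct modified p pel pion C y /\
       sigma_ion p * pionL y = i_ct modified p pel pion C y /\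
       rho_a p * D2 p * CL y = Mm p / (4 * Fc p) * i_ct modified p pel pion C y) /\
    (forall y, hb < y < h2 p ->
       sigma_el p * pelR y = 0 /\ sigma_ion p * pionR y = 0 /\
       rho_a p * D2 p * CR y = 0) /\
    - sigma_el p * pel' (h2 p) = j_cell p /\
    pion' (h2 p) = 0 /\
    pel (h2 p) = V2 p /\
    C (h2 p) = C_bulk p /\
    pel' (h1 p) = 0 /\
    - sigma_ion p * pion' (h1 p) = j_cell p /\
    C' (h1 p) = 0 /\
    s_signed p pel pion C hb = 0.

(* Main.v *)
Require Import Defs.
From Stdlib Require Import Reals Lra.
Open Scope R_scope.

Definition cl (a b t : R) : R := Rmax a (Rmin b t).

Lemma cl_in a b t : a <= b -> a <= cl a b t <= b.
Proof. unfold cl, Rmax, Rmin; intros; repeat destruct Rle_dec; lra. Qed.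

Lemma cl_id a b t : a <= t <= b -> cl a b t = t.
Proof. unfold cl, Rmax, Rmin; intros; repeat destruct Rle_dec; lra. Qed.

Lemma cl_lip a b t x : a <= x <= b -> Rabs (cl a b t - x) <= Rabs (t - x).
Proof. unfold cl, Rmax, Rmin, Rabs; intros; repeat destruct Rle_dec;
  repeat destruct Rcase_abs; lra. Qed.

Lemma deriv_to_lim f l a b x : deriv_within f l a b x -> a < x < b -> derivable_pt_lim f x l.
Proof.
  intros H Hx eps He. destruct (H eps He) as [d [Hd Hd2]].
  assert (Hm : 0 < Rmin d (Rmin (x - a) (b - x))).
  { repeat apply Rmin_pos; lra. }
  exists (mkposreal _ Hm). simpl. intros h Hh0 Hh.
  assert (H1 := Rmin_l d (Rmin (x - a) (b - x))).
  assert (H2 := Rmin_r d (Rmin (x - a) (b - x))).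
  assert (H3 := Rmin_l (x - a) (b - x)).
  assert (H4 := Rmin_r (x - a) (b - x)).
  assert (Hab : Rabs h < d /\ - (x - a) < h < b - x).
  { split. lra. assert (Hr : Rabs h < Rmin (x - a) (b - x)) by lra.
    apply Rabs_def2 in Hr. lra. }
  specialize (Hd2 (x + h)). replace (x + h - x) with h in Hd2 by ring.
  apply Hd2; [lra | intro; apply Hh0; lra | lra].
Qed.

Definition CC (f : R -> R) (a b : R) : Prop :=
  forall y z x, a <= y -> y <= x -> x <= z -> z <= b ->
    continuity_pt (fun t => f (cl y z t)) x.

Lemma cont_eps f x : (forall eps, 0 < eps -> exists alp, 0 < alp /\
   forall t, Rabs (t - x) < alp -> Rabs (f t - f x) < eps) -> continuity_pt f x.
Proof.
  intros H. unfold continuity_pt, continue_in, limit1_in, limit_in; simpl; unfold R_dist.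
  intros eps He. destruct (H eps He) as [a [Ha H2]]. exists a; split; auto.
  intros t [_ Ht]. auto.
Qed.

Lemma deriv_CC f f' a b a' b' : has_deriv_on f f' a b -> a <= a' -> b' <= b -> CC f a' b'.
Proof.
  intros H Ha Hb y z x Hy Hyx Hxz Hz. apply cont_eps. intros eps He.
  assert (Hx : a <= x <= b) by lra.
  destruct (H x Hx 1 Rlt_0_1) as [d [Hd Hd2]].
  set (L := Rabs (f' x) + 1).
  assert (HL : 0 < L) by (unfold L; generalize (Rabs_pos (f' x)); lra).
  assert (Hm : 0 < Rmin d (eps / L)).
  { apply Rmin_pos; auto. apply Rdiv_lt_0_compat; auto. }
  exists (Rmin d (eps / L)); split; auto.
  intros t Ht. rewrite (cl_id y z x) by lra.
  assert (Hc := cl_in y z t). assert (Hl := cl_lip y z t x).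
  assert (H1 := Rmin_l d (eps / L)). assert (H2 := Rmin_r d (eps / L)).
  set (u := cl y z t) in *.
  destruct (Req_dec u x) as [E|E].
  - rewrite E. replace (f x - f x) with 0 by ring. rewrite Rabs_R0. auto.
  - assert (Hu : Rabs (u - x) < d) by (specialize (Hl ltac:(lra)); lra).
    specialize (Hd2 u ltac:(specialize (Hc ltac:(lra)); lra) E Hu).
    assert (Hq : Rabs ((f u - f x) / (u - x)) < L).
    { unfold L. assert (T := Rabs_triang ((f u - f x) / (u - x) - f' x) (f' x)).
      replace ((f u - f x) / (u - x) - f' x + f' x) with ((f u - f x) / (u - x)) in T by ring.
      lra. }
    replace (f u - f x) with ((f u - f x) / (u - x) * (u - x)) by (field; intro; apply E; lra).
    rewrite Rabs_mult.
    assert (Hp : 0 < Rabs (u - x)) by (apply Rabs_pos_lt; intro; apply E; lra).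
    assert (Hl' : Rabs (u - x) < eps / L) by (specialize (Hl ltac:(lra)); lra).
    apply Rle_lt_trans with (L * Rabs (u - x)).
    + apply Rmult_le_compat_r; lra.
    + apply Rmult_lt_reg_r with (/ L). apply Rinv_0_lt_compat; auto.
      replace (L * Rabs (u - x) * / L) with (Rabs (u - x)) by (field; lra).
      exact Hl'.
Qed.

Lemma CC_sub f a b a' b' : CC f a b -> a <= a' -> b' <= b -> CC f a' b'.
Proof. intros H ? ? y z x ? ? ? ?. apply H; lra. Qed.

Lemma CC_lin f g al be a b : CC f a b -> CC g a b -> CC (fun t => al * f t + be * g t) a b.
Proof.
  intros Hf Hg y z x ? ? ? ?.
  specialize (Hf y z x ltac:(lra) ltac:(lra) ltac:(lra) ltac:(lra)).
  specialize (Hg y z x ltac:(lra) ltac:(lra) ltac:(lra) ltac:(lra)).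
  exact (continuity_pt_plus _ _ x (continuity_pt_scal _ al x Hf) (continuity_pt_scal _ be x Hg)).
Qed.

Lemma lim_local f g x l d : derivable_pt_lim f x l -> 0 < d ->
  (forall t, Rabs (t - x) < d -> g t = f t) -> derivable_pt_lim g x l.
Proof.
  intros H Hd Hfg eps He. destruct (H eps He) as [del Hdel].
  assert (Hm : 0 < Rmin del d) by (apply Rmin_pos; auto; apply cond_pos).
  exists (mkposreal _ Hm). simpl. intros h Hh0 Hh.
  assert (H1 := Rmin_l del d). assert (H2 := Rmin_r del d).
  rewrite (Hfg (x + h)) by (replace (x + h - x) with h by ring; lra).
  rewrite (Hfg x) by (replace (x - x) with 0 by ring; rewrite Rabs_R0; auto).
  apply Hdel; auto. lra.
Qed.

Lemma mvt_cl f g a b : a < b -> CC f a b ->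
  (forall x, a < x < b -> derivable_pt_lim f x (g x)) ->
  exists c, a < c < b /\ f b - f a = g c * (b - a).
Proof.
  intros Hab Hc Hd.
  set (fe := fun t => f (cl a b t)).
  assert (Hde : forall x, a < x < b -> derivable_pt_lim fe x (g x)).
  { intros x Hx. apply lim_local with f (Rmin (x - a) (b - x)).
    apply Hd; auto. apply Rmin_pos; lra.
    intros t Ht. unfold fe. rewrite cl_id; auto.
    assert (H1 := Rmin_l (x - a) (b - x)). assert (H2 := Rmin_r (x - a) (b - x)).
    apply Rabs_def2 in Ht; lra. }
  assert (pr1 : forall c, a < c < b -> derivable_pt fe c).
  { intros c Hc'. exists (g c). apply Hde; auto. }
  assert (pr2 : forall c, a < c < b -> derivable_pt id c).
  { intros c _. apply derivable_pt_id. }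
  destruct (MVT fe id a b pr1 pr2 Hab) as [c [P Hc']].
  - intros c Hc'. apply (Hc a b c); lra.
  - intros c _. apply derivable_continuous_pt, derivable_pt_id.
  - exists c; split; auto.
    rewrite (derive_pt_eq_0 _ _ _ (pr1 c P) (Hde c P)) in Hc'.
    rewrite (derive_pt_eq_0 _ _ _ (pr2 c P) (derivable_pt_lim_id c)) in Hc'.
    unfold fe, id in Hc'. rewrite (cl_id a b b), (cl_id a b a) in Hc' by lra.
    lra.
Qed.

Lemma const_inv f a b : a < b -> CC f a b ->
  (forall x, a < x < b -> derivable_pt_lim f x 0) -> forall x, a <= x <= b -> f x = f a.
Proof.
  intros Hab Hc Hd x Hx. destruct (Req_dec x a) as [->|Ne]; auto.
  destruct (mvt_cl f (fun _ => 0) a x) as [c [Hc1 Hc2]].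
  - destruct Hx as [[Hx|Hx] _]; [lra| congruence].
  - apply CC_sub with a b; [exact Hc|lra|lra].
  - intros t Ht. apply Hd; lra.
  - rewrite Rmult_0_l in Hc2; lra.
Qed.

Lemma dlin f g x l1 l2 al be : derivable_pt_lim f x l1 -> derivable_pt_lim g x l2 ->
  derivable_pt_lim (fun t => al * f t + be * g t) x (al * l1 + be * l2).
Proof. intros H1 H2.
  exact (derivable_pt_lim_plus _ _ x _ _ (derivable_pt_lim_scal _ al x l1 H1)
           (derivable_pt_lim_scal _ be x l2 H2)). Qed.

Lemma lim_eq f x l l' : derivable_pt_lim f x l -> l = l' -> derivable_pt_lim f x l'.
Proof. intros H ->; auto. Qed.

Lemma CC_s p pel pion C a b : CC pel a b -> CC pion a b -> CC C a b ->
  (forall x, a <= x <= b -> 0 < C x) -> 0 < C_bulk p ->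
  CC (s_signed p pel pion C) a b.
Proof.
  intros He Hi Hc Hp Hb y z x ? ? ? ?.
  specialize (He y z x ltac:(lra) ltac:(lra) ltac:(lra) ltac:(lra)).
  specialize (Hi y z x ltac:(lra) ltac:(lra) ltac:(lra) ltac:(lra)).
  specialize (Hc y z x ltac:(lra) ltac:(lra) ltac:(lra) ltac:(lra)).
  assert (Hpos : 0 < C (cl y z x)) by (rewrite cl_id by lra; apply Hp; lra).
  assert (Hk : continuity_pt (fun _ : R => C_bulk p) x) by (apply continuity_pt_const; intros ? ?; auto).
  assert (Hd := continuity_pt_div _ _ x Hk Hc ltac:(lra)).
  assert (Hln : continuity_pt ln (C_bulk p / C (cl y z x))).
  { apply derivable_continuous_pt. exists (/ (C_bulk p / C (cl y z x))).
    apply derivable_pt_lim_ln. apply Rdiv_lt_0_compat; auto. }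
  assert (Hl := continuity_pt_comp _ _ x Hd Hln).
  unfold s_signed.
  exact (continuity_pt_minus _ _ x (continuity_pt_minus _ _ x Hi He)
          (continuity_pt_scal _ (Rg p * Tt p / (4 * Fc p)) x Hl)).
Qed.

Lemma deriv_s p pel pion C x E P G : derivable_pt_lim pel x E ->
  derivable_pt_lim pion x P -> derivable_pt_lim C x G -> 0 < C x -> 0 < C_bulk p -> 0 < Fc p ->
  derivable_pt_lim (s_signed p pel pion C) x
    (P - E + Rg p * Tt p / (4 * Fc p) * (G / C x)).
Proof.
  intros He Hi Hc Hp Hb Hf.
  assert (Hd := derivable_pt_lim_div (fun _ => C_bulk p) C x 0 G
                  (derivable_pt_lim_const (C_bulk p) x) Hc ltac:(lra)).
  assert (Hl := derivable_pt_lim_comp _ ln x _ _ Hd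
                 (derivable_pt_lim_ln (C_bulk p / C x) ltac:(apply Rdiv_lt_0_compat; auto))).
  assert (H := derivable_pt_lim_minus _ _ x _ _ (derivable_pt_lim_minus _ _ x _ _ Hi He)
          (derivable_pt_lim_scal _ (Rg p * Tt p / (4 * Fc p)) x _ Hl)).
  unfold s_signed. eapply lim_eq. exact H.
  unfold Rsqr. field. repeat split; lra.
Qed.

Lemma sol_facts p hb b pel pion C : valid_params p -> h1 p < b -> b <= hb -> hb < h2 p ->
  cathode_solution true p hb pel pion C ->
  exists E P G CL,
  (forall x, h1 p <= x <= h2 p -> deriv_within C (G x) (h1 p) (h2 p) x) /\
  G (h1 p) = 0 /\
  (forall x, h1 p <= x <= b -> sigma_el p * E x + sigma_ion p * P x = - j_cell p) /\
  (forall x, h1 p <= x <= b -> rho_a p * D2 p * G x + (- (Mm p / (4 * Fc p) * sigma_ion p)) * P x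
                                = Mm p / (4 * Fc p) * j_cell p) /\
  CC G (h1 p) b /\
  (forall x, h1 p < x < b -> derivable_pt_lim G x (CL x)) /\
  (forall x, h1 p < x < b -> rho_a p * D2 p * CL x = Mm p / (4 * Fc p) * i_ct true p pel pion C x) /\
  CC (s_signed p pel pion C) (h1 p) b /\
  (forall x, h1 p < x < b -> derivable_pt_lim (s_signed p pel pion C) x
        (P x - E x + Rg p * Tt p / (4 * Fc p) * (G x / C x))) /\
  (forall x, h1 p <= x <= h2 p -> 0 < C x) /\
  s_signed p pel pion C hb = 0.
Proof.
  intros Hv Hb Hbh Hh Hsol. assert (Hv' := Hv).
  destruct Hv' as (H1 & H12 & Hse & Hsi & Hra & HD & HM & HF & HR & HT & HA & Hj & HCb & HCb1).
  destruct Hsol as (pel' & pion' & C' & pelL & pionL & CL & pelR & pionR & CR &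
    Hel & Hion & HC & Hel2 & Hion2 & HC2 & _ & _ & _ & Hpos & Heq & _ & Bj & _ & _ & _ &
    Bel1 & Bion1 & BC1 & Hs).
  destruct Hel as [Hel _]. destruct Hion as [Hion _]. destruct HC as [HC _].
  destruct Hel2 as [_ [Hel2 _]]. destruct Hion2 as [_ [Hion2 _]]. destruct HC2 as [_ [HC2 _]].
  exists pel', pion', C', CL.
  assert (CCe : CC pel' (h1 p) b) by (apply deriv_CC with pelL (h1 p) hb; auto; lra).
  assert (CCi : CC pion' (h1 p) b) by (apply deriv_CC with pionL (h1 p) hb; auto; lra).
  assert (CCc : CC C' (h1 p) b) by (apply deriv_CC with CL (h1 p) hb; auto; lra).
  assert (De : forall x, h1 p < x < b -> derivable_pt_lim pel' x (pelL x)).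
  { intros x Hx. apply deriv_to_lim with (h1 p) hb; [apply Hel2|]; lra. }
  assert (Di : forall x, h1 p < x < b -> derivable_pt_lim pion' x (pionL x)).
  { intros x Hx. apply deriv_to_lim with (h1 p) hb; [apply Hion2|]; lra. }
  assert (Dc : forall x, h1 p < x < b -> derivable_pt_lim C' x (CL x)).
  { intros x Hx. apply deriv_to_lim with (h1 p) hb; [apply HC2|]; lra. }
  split; [exact HC|]. split; [exact BC1|].
  split.
  { intros x Hx.
    assert (E := const_inv (fun t => sigma_el p * pel' t + sigma_ion p * pion' t) (h1 p) b Hb
      (CC_lin _ _ _ _ _ _ CCe CCi)).
    simpl in E. rewrite E; auto. rewrite Bel1. lra.
    intros t Ht. eapply lim_eq. apply dlin; [apply De|apply Di]; auto.
    destruct (Heq t ltac:(lra)) as [Q1 [Q2 _]]. lra. }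
  split.
  { intros x Hx.
    assert (E := const_inv (fun t => rho_a p * D2 p * C' t + (- (Mm p / (4 * Fc p) * sigma_ion p)) * pion' t) (h1 p) b Hb
      (CC_lin _ _ _ _ _ _ CCc CCi)).
    simpl in E. rewrite E; auto. rewrite BC1.
    replace (- (Mm p / (4 * Fc p) * sigma_ion p) * pion' (h1 p)) with
      (Mm p / (4 * Fc p) * (- sigma_ion p * pion' (h1 p))) by ring.
    rewrite Bion1. ring.
    intros t Ht. eapply lim_eq. apply dlin; [apply Dc|apply Di]; auto.
    destruct (Heq t ltac:(lra)) as [Q1 [Q2 Q3]]. rewrite Q3.
    replace (- (Mm p / (4 * Fc p) * sigma_ion p) * pionL t) with
        (- (Mm p / (4 * Fc p)) * (sigma_ion p * pionL t)) by ring.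
    rewrite Q2. ring. }
  split; [exact CCc|]. split; [exact Dc|].
  split. { intros x Hx. destruct (Heq x ltac:(lra)) as [_ [_ Q3]]. exact Q3. }
  split.
  { apply CC_s; auto; try lra.
    apply deriv_CC with pel' (h1 p) (h2 p); auto; lra.
    apply deriv_CC with pion' (h1 p) (h2 p); auto; lra.
    apply deriv_CC with C' (h1 p) (h2 p); auto; lra.
    intros x Hx; apply Hpos; lra. }
  split.
  { intros x Hx. apply deriv_s; auto; try lra.
    apply deriv_to_lim with (h1 p) (h2 p); [apply Hel|]; lra.
    apply deriv_to_lim with (h1 p) (h2 p); [apply Hion|]; lra.
    apply deriv_to_lim with (h1 p) (h2 p); [apply HC|]; lra.
    apply Hpos; lra. }
  split; auto.
Qed.

Lemma nonincr_deriv f1 f2 l1 l2 a b a' x :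
  deriv_within f1 l1 a b x -> deriv_within f2 l2 a b x -> a <= a' -> a' < x -> x <= b ->
  (forall u v, a' <= u -> u <= v -> v <= x -> f2 v - f1 v <= f2 u - f1 u) -> l2 - l1 <= 0.
Proof.
  intros D1 D2 Ha Hax Hxb Hm. destruct (Rle_or_lt (l2 - l1) 0) as [|Hl]; auto. exfalso.
  set (eps := (l2 - l1) / 2).
  destruct (D1 eps ltac:(unfold eps; lra)) as [d1 [Hd1 Q1]].
  destruct (D2 eps ltac:(unfold eps; lra)) as [d2 [Hd2 Q2]].
  set (m := Rmin d1 d2).
  assert (Hm1 : m <= d1) by (unfold m; apply Rmin_l). assert (Hm2 : m <= d2) by (unfold m; apply Rmin_r).
  assert (Hmp : 0 < m) by (apply Rmin_pos; auto).
  set (y := Rmax a' (x - m / 2)).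
  assert (Hy1 := Rmax_l a' (x - m/2)). assert (Hy2 : y < x).
  { unfold y, Rmax; destruct Rle_dec; lra. }
  assert (Hy3 : x - y < m) by (unfold y, Rmax; destruct Rle_dec; lra).
  fold y in Hy1.
  assert (Hab : Rabs (y - x) = x - y) by (rewrite Rabs_left; lra).
  specialize (Q1 y ltac:(lra) ltac:(intro; lra) ltac:(lra)).
  specialize (Q2 y ltac:(lra) ltac:(intro; lra) ltac:(lra)).
  apply Rabs_def2 in Q1. apply Rabs_def2 in Q2.
  assert (Hq : (f2 y - f2 x) / (y - x) - (f1 y - f1 x) / (y - x) <= 0).
  { replace ((f2 y - f2 x) / (y - x) - (f1 y - f1 x) / (y - x)) with
      (((f2 y - f1 y) - (f2 x - f1 x)) * / (y - x)) by (field; lra).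
    assert (Hn := Hm y x ltac:(lra) ltac:(lra) ltac:(lra)).
    assert (0 < / (x - y)) by (apply Rinv_0_lt_compat; lra).
    replace (/ (y - x)) with (- / (x - y)) by (field; lra). nra. }
  unfold eps in *. lra.
Qed.

Lemma Kpos p : 0 < Kconst p.
Proof. unfold Kconst. assert (H := exp_pos (- 85859 / (Rg p * Tt p))). nra. Qed.

Lemma gap a t1 t2 : 0 < a -> 0 <= t1 -> t1 < t2 ->
  0 <= exp (12 / 10 * a * t1) - exp (- (a * t1)) /\
  exp (12 / 10 * a * t1) - exp (- (a * t1)) < exp (12 / 10 * a * t2) - exp (- (a * t2)).
Proof.
  intros Ha H1 H2. split.
  - destruct (Rle_lt_or_eq_dec _ _ H1) as [H|H].
    + assert (exp (- (a * t1)) < exp (12 / 10 * a * t1)) by (apply exp_increasing; nra). lra.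
    + subst. replace (12/10*a*0) with (-(a*0)) by ring. lra.
  - assert (exp (12 / 10 * a * t1) < exp (12 / 10 * a * t2)) by (apply exp_increasing; nra).
    assert (exp (- (a * t2)) < exp (- (a * t1))) by (apply exp_increasing; nra). lra.
Qed.

Lemma i_nonneg p pel pion C x : valid_params p -> 0 <= i_ct true p pel pion C x.
Proof.
  intros Hv. destruct Hv as (H1 & H12 & Hse & Hsi & Hra & HD & HM & HF & HR & HT & HA & Hj & HCb & HCb1).
  unfold i_ct, eta.
  set (e := Rabs (s_signed p pel pion C x)).
  assert (He : 0 <= e) by apply Rabs_pos.
  set (a := Fc p / (Rg p * Tt p)).
  assert (Ha : 0 < a) by (unfold a; apply Rdiv_lt_0_compat; nra).
  replace (12 / 10 * Fc p * e / (Rg p * Tt p)) with (12/10 * a * e) by (unfold a; field; lra).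
  replace (Fc p * e / (Rg p * Tt p)) with (a * e) by (unfold a; field; lra).
  destruct (gap a e (e+1) Ha He ltac:(lra)) as [G _].
  assert (Hk := Kpos p).
  assert (Hr : 0 < Rpower (rho_a p * Rg p * Tt p * C x / Mm p) (2 / 10)) by (unfold Rpower; apply exp_pos).
  assert (0 <= Aa p * Kconst p * Rpower (rho_a p * Rg p * Tt p * C x / Mm p) (2 / 10)).
  { apply Rlt_le. apply Rmult_lt_0_compat; auto. apply Rmult_lt_0_compat; auto. }
  apply Rmult_le_pos; auto.
Qed.

Lemma i_mono p pel1 pion1 C1 pel2 pion2 C2 x : valid_params p ->
  0 <= s_signed p pel1 pion1 C1 x -> s_signed p pel1 pion1 C1 x < s_signed p pel2 pion2 C2 x ->
  0 < C1 x -> C1 x < C2 x ->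
  i_ct true p pel1 pion1 C1 x < i_ct true p pel2 pion2 C2 x.
Proof.
  intros Hv Hs1 Hs12 Hc1 Hc12.
  destruct Hv as (H1 & H12 & Hse & Hsi & Hra & HD & HM & HF & HR & HT & HA & Hj & HCb & HCb1).
  unfold i_ct, eta. rewrite !Rabs_pos_eq by lra.
  set (e1 := s_signed p pel1 pion1 C1 x) in *.
  set (e2 := s_signed p pel2 pion2 C2 x) in *.
  set (a := Fc p / (Rg p * Tt p)).
  assert (Ha : 0 < a) by (unfold a; apply Rdiv_lt_0_compat; nra).
  replace (12 / 10 * Fc p * e1 / (Rg p * Tt p)) with (12/10 * a * e1) by (unfold a; field; lra).
  replace (Fc p * e1 / (Rg p * Tt p)) with (a * e1) by (unfold a; field; lra).
  replace (12 / 10 * Fc p * e2 / (Rg p * Tt p)) with (12/10 * a * e2) by (unfold a; field; lra).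
  replace (Fc p * e2 / (Rg p * Tt p)) with (a * e2) by (unfold a; field; lra).
  destruct (gap a e1 e2 Ha Hs1 Hs12) as [G1 G2].
  assert (Hk := Kpos p).
  set (P1 := Rpower (rho_a p * Rg p * Tt p * C1 x / Mm p) (2 / 10)).
  set (P2 := Rpower (rho_a p * Rg p * Tt p * C2 x / Mm p) (2 / 10)).
  assert (HP1 : 0 < P1) by (unfold P1, Rpower; apply exp_pos).
  assert (HP12 : P1 < P2).
  { unfold P1, P2, Rpower. apply exp_increasing. apply Rmult_lt_compat_l; [lra|].
    apply ln_increasing. apply Rdiv_lt_0_compat; [|lra].
    apply Rmult_lt_0_compat; [|lra]. apply Rmult_lt_0_compat; [|lra]. nra.
    unfold Rdiv. apply Rmult_lt_compat_r. apply Rinv_0_lt_compat; lra.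
    apply Rmult_lt_compat_l; auto. apply Rmult_lt_0_compat; [|lra]. nra. }
  set (g1 := exp (12 / 10 * a * e1) - exp (- (a * e1))) in *.
  set (g2 := exp (12 / 10 * a * e2) - exp (- (a * e2))) in *.
  assert (HAK : 0 < Aa p * Kconst p) by nra.
  set (AK := Aa p * Kconst p) in *.
  assert (P1 * g1 < P2 * g2) by nra.
  nra.
Qed.

Theorem mainTheorem5 :
  forall (p : cathode_params) (hb hb' : R),
    valid_params p ->
    h1 p < hb -> hb < hb' -> hb' < h2 p ->
    ~ exists pelI pionI CI pelII pionII CII : R -> R,
        cathode_solution true p hb pelI pionI CI /\
        cathode_solution true p hb' pelII pionII CII /\
        (forall y, h1 p <= y <= hb -> 0 <= s_signed p pelI pionI CI y) /\
        (forall y, h1 p <= y <= hb' -> 0 <= s_signed p pelII pionII CII y) /\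
        0 < s_signed p pelII pionII CII hb /\
        (forall y, h1 p <= y <= hb -> 0 < CII y - CI y) /\
        (forall x y, h1 p <= x -> x <= y -> y <= hb ->
           CII y - CI y <= CII x - CI x).
Proof.
  intros p hb hb' Hv Hh1 Hbb Hbh
    [pelI [pionI [CI [pelII [pionII [CII [S1 [S2 [N1 [N2 [Sp [Cp Cm]]]]]]]]]]]].
  destruct (sol_facts p hb hb pelI pionI CI Hv Hh1 (Rle_refl _) ltac:(lra) S1) as
    (E1 & P1 & G1 & CL1 & D1 & G1h & F1a & F1b & CC1 & DG1 & EQ1 & CCs1 & Ds1 & Cpos1 & s1hb).
  destruct (sol_facts p hb' hb pelII pionII CII Hv Hh1 ltac:(lra) ltac:(lra) S2) as
    (E2 & P2 & G2 & CL2 & D2' & G2h & F2a & F2b & CC2 & DG2 & EQ2 & CCs2 & Ds2 & Cpos2 & _).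
  assert (Hv' := Hv).
  destruct Hv' as (H1 & H12 & Hse & Hsi & Hra & HD & HM & HF & HR & HT & HA & Hj & HCb & HCb1).
  set (a := h1 p) in *.
  assert (HrD : 0 < rho_a p * D2 p) by nra.
  assert (Hk0 : 0 < Mm p / (4 * Fc p)) by (apply Rdiv_lt_0_compat; lra).
  assert (Hc : 0 < Rg p * Tt p / (4 * Fc p)) by (apply Rdiv_lt_0_compat; nra).
  assert (Gle : forall x, a <= x <= hb -> G2 x - G1 x <= 0).
  { intros x Hx. destruct (Rle_lt_or_eq_dec _ _ (proj1 Hx)) as [Hx'|Hx'].
    - apply (nonincr_deriv CI CII (G1 x) (G2 x) a (h2 p) a x); try lra.
      apply D1; lra. apply D2'; lra.
      intros u v Hu Huv Hv0. apply Cm; lra.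
    - subst x. rewrite G1h, G2h. lra. }
  assert (G1nn : forall x, a <= x <= hb -> 0 <= G1 x).
  { intros x Hx. destruct (Rle_lt_or_eq_dec _ _ (proj1 Hx)) as [Hx'|Hx'].
    - destruct (mvt_cl G1 CL1 a x Hx' (CC_sub G1 a hb a x CC1 (Rle_refl _) ltac:(lra))) as [c [Hc1 Hc2]].
      { intros t Ht. apply DG1; lra. }
      assert (Hi := i_nonneg p pelI pionI CI c Hv).
      assert (HE := EQ1 c ltac:(lra)).
      assert (0 <= CL1 c) by nra. nra.
    - subst x. rewrite G1h. lra. }
  assert (Wd : forall x, a < x < hb ->
     1 * (P2 x - E2 x + Rg p * Tt p / (4 * Fc p) * (G2 x / CII x)) +
     -1 * (P1 x - E1 x + Rg p * Tt p / (4 * Fc p) * (G1 x / CI x)) <= 0).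
  { intros x Hx.
    assert (Hg := Gle x ltac:(lra)). assert (Hg1 := G1nn x ltac:(lra)).
    assert (Ha1 := F1a x ltac:(lra)). assert (Ha2 := F2a x ltac:(lra)).
    assert (Hb1 := F1b x ltac:(lra)). assert (Hb2 := F2b x ltac:(lra)).
    assert (HC1 : 0 < CI x) by (apply Cpos1; lra).
    assert (HC12 := Cp x ltac:(lra)).
    assert (HP : P2 x - P1 x <= 0).
    { assert (Mm p / (4 * Fc p) * sigma_ion p * (P2 x - P1 x) = rho_a p * D2 p * (G2 x - G1 x)) by lra.
      assert (0 < Mm p / (4 * Fc p) * sigma_ion p) by nra. nra. }
    assert (HE : sigma_el p * (E2 x - E1 x) = - sigma_ion p * (P2 x - P1 x)) by lra.
    assert (HE' : 0 <= E2 x - E1 x) by nra.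
    assert (HGC : G2 x / CII x - G1 x / CI x <= 0).
    { replace (G2 x / CII x - G1 x / CI x) with ((G2 x * CI x - G1 x * CII x) / (CI x * CII x))
        by (field; lra).
      assert (G2 x * CI x - G1 x * CII x <= 0) by nra.
      assert (0 < / (CI x * CII x)) by (apply Rinv_0_lt_compat; nra).
      unfold Rdiv. nra. }
    assert (Rg p * Tt p / (4 * Fc p) * (G2 x / CII x - G1 x / CI x) <= 0) by nra.
    lra. }
  assert (Sl : forall y, a < y < hb -> s_signed p pelI pionI CI y < s_signed p pelII pionII CII y).
  { intros y Hy.
    set (w := fun t => 1 * s_signed p pelII pionII CII t + -1 * s_signed p pelI pionI CI t).
    destruct (mvt_cl w (fun t => 1 * (P2 t - E2 t + Rg p * Tt p / (4 * Fc p) * (G2 t / CII t)) +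
     -1 * (P1 t - E1 t + Rg p * Tt p / (4 * Fc p) * (G1 t / CI t))) y hb ltac:(lra)) as [c [Hc1 Hc2]].
    - apply CC_sub with a hb; [|lra|lra]. unfold w. apply CC_lin; auto.
    - intros t Ht. unfold w. apply dlin; [apply Ds2|apply Ds1]; lra.
    - assert (Hw := Wd c ltac:(lra)).
      assert (Hw2 : w hb - w y <= 0) by (rewrite Hc2; nra).
      unfold w in Hw2. rewrite s1hb in Hw2. lra. }
  destruct (mvt_cl (fun t => 1 * G2 t + -1 * G1 t) (fun t => 1 * CL2 t + -1 * CL1 t) a hb Hh1
    (CC_lin _ _ _ _ _ _ CC2 CC1)) as [c [Hc1 Hc2]].
  { intros t Ht. apply dlin; [apply DG2|apply DG1]; lra. }
  assert (HC1 : 0 < CI c) by (apply Cpos1; lra).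
  assert (HC12 := Cp c ltac:(lra)).
  assert (Hi := i_mono p pelI pionI CI pelII pionII CII c Hv (N1 c ltac:(lra)) (Sl c ltac:(lra))
     HC1 ltac:(lra)).
  assert (HE1 := EQ1 c ltac:(lra)). assert (HE2 := EQ2 c ltac:(lra)).
  assert (HCL : 0 < CL2 c - CL1 c).
  { assert (rho_a p * D2 p * (CL2 c - CL1 c) > 0) by nra. nra. }
  assert (Hg := Gle hb ltac:(lra)).
  rewrite G1h, G2h in Hc2.
  assert (0 < (1 * CL2 c + -1 * CL1 c) * (hb - a)) by nra.
  lra.
Qed.
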